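(* Let $\nabla$ be an ES combination operator satisfying (ESF2), (ESF7) and (ESF8). Then $\nabla$ satisfies (ESF-U).
   Context: Setting: epistemic space $(\mathcal E,B,\mathcal L_{\mathcal P})$ ($\mathcal E$ nonempty, $B:\mathcal E\to$ propositional formulas over finite $\mathcal P$, image modulo equivalence exactly the consistent formulas); agents form a well-ordered set $\mathcal S$; a society is a nonempty finite $N\subseteq\mathcal S$; an $N$-profile is $\Phi:N\to\mathcal E$, $E_i=\Phi(i)$, identified with $E_i$ if $N=\{i\}$; profiles on $\{i_1<\dots<i_n\}$, $\{j_1<\dots<j_m\}$ are equivalent ($\equiv$) if $n=m$ and entries coincide position-wise; $\Phi\upharpoonright_M$ restriction; partition $\{N_1,N_2\}$: nonempty disjoint parts with union $N$. An ES combination operator maps (profile, $E$) to $\nabla(\Phi,E)\in\mathcal E$. (ESF2): if $\Phi\equiv\Phi'$ and $B(E)\equiv B(E')$ then $B(\nabla(\Phi,E))\equiv B(\nabla(\Phi',E'))$. (ESF7): for every partition $\{N_1,N_2\}$ of $N$, $N$-profile $\Phi$, $E$: $B(\nabla(\Phi\upharpoonright_{N_1},E))\wedge B(\nabla(\Phi\upharpoonright_{N_2},E))\vdash B(\nabla(\Phi,E))$. (ESF8): if that conjunction is consistent, then $B(\nabla(\Phi,E))\vdash B(\nabla(\Phi\upharpoonright_{N_1},E))\wedge B(\nabla(\Phi\upharpoonright_{N_2},E))$. (ESF-U): for every society $N$, $N$-profile $\Phi$ and $E$, if $E_i=E_j$ for all $i,j\in N$ then $B(\nabla(\Phi,E))\equiv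 B(\nabla(E_i,E))$ for all $i\in N$. *)

(* Defs.v *)
From Stdlib Require Import List Sorted Relations Wellfounded.
Import ListNotations.
Set Implicit Arguments.

Inductive form (P : Type) : Type :=
| FVar : P -> form P
| FTop : form P
| FBot : form P
| FNeg : form P -> form P
| FAnd : form P -> form P -> form P
| FOr  : form P -> form P -> form P
| FImp : form P -> form P -> form P.

Arguments FTop {P}.
Arguments FBot {P}.

Fixpoint sat {P : Type} (v : P -> bool) (f : form P) : bool :=
  match f with
  | FVar x => v x
  | FTop => true
  | FBot => false
  | FNeg g => negb (sat v g)
  | FAnd g h => andb (sat v g) (sat v h)
  | FOr g h => orb (sat v g) (sat v h)
  | FImp g h => orb (negb (sat v g)) (sat v h)
  end.

(** Classical propositional consequence (semantic; equivalent to derivability). *)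
Definition entails {P : Type} (f g : form P) : Prop :=
  forall v : P -> bool, sat v f = true -> sat v g = true.

Definition fequiv {P : Type} (f g : form P) : Prop := entails f g /\ entails g f.

Definition consistent {P : Type} (f : form P) : Prop :=
  exists v : P -> bool, sat v f = true.

Record epistemic_space (P E : Type) (B : E -> form P) : Prop := {
  es_P_finite : exists l : list P, forall x : P, In x l;
  es_E_nonempty : inhabited E;
  es_B_consistent : forall e : E, consistent (B e);
  es_B_onto : forall f : form P, consistent f -> exists e : E, fequiv (B e) f
}.

Record well_order (S : Type) (lt : S -> S -> Prop) : Prop := {
  wo_irrefl : forall x, ~ lt x x;
  wo_trans : forall x y z, lt x y -> lt y z -> lt x z;
  wo_total : forall x y, lt x y \/ x = y \/ lt y x;
  wo_wf : well_founded lt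
}.

(** A profile over a society N = {i_1 < ... < i_n} is represented as the list
    [(i_1, E_{i_1}); ...; (i_n, E_{i_n})], strictly increasing in the agents
    and nonempty.  Its society is [map fst]. *)
Definition profile (S E : Type) := list (S * E).

Definition is_profile {S E : Type} (lt : S -> S -> Prop) (Phi : profile S E) : Prop :=
  Phi <> [] /\ StronglySorted (fun a b => lt (fst a) (fst b)) Phi.

Definition prof_equiv {S E : Type} (Phi Phi' : profile S E) : Prop :=
  map snd Phi = map snd Phi'.

Definition restrict {S E : Type} (p : S -> bool) (Phi : profile S E) : profile S E :=
  filter (fun a => p (fst a)) Phi.

(** A partition {N1, N2} of the society of Phi is given by p : S -> bool,
    N1 = {i in N | p i}, N2 = {i in N | ~ p i}, both nonempty. *)
Definition is_partition {S E : Type} (p : S -> bool) (Phi : profile S E) : Prop :=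
  restrict p Phi <> [] /\ restrict (fun i => negb (p i)) Phi <> [].

(** ES combination operators: nabla Phi E; only its values on genuine
    profiles (is_profile) are constrained. *)

Definition ESF2 {P S E : Type} (lt : S -> S -> Prop) (B : E -> form P)
    (nabla : profile S E -> E -> E) : Prop :=
  forall (Phi Phi' : profile S E) (e e' : E),
    is_profile lt Phi -> is_profile lt Phi' ->
    prof_equiv Phi Phi' -> fequiv (B e) (B e') ->
    fequiv (B (nabla Phi e)) (B (nabla Phi' e')).

Definition ESF7 {P S E : Type} (lt : S -> S -> Prop) (B : E -> form P)
    (nabla : profile S E -> E -> E) : Prop :=
  forall (Phi : profile S E) (p : S -> bool) (e : E),
    is_profile lt Phi -> is_partition p Phi ->
    entails (FAnd (B (nabla (restrict p Phi) e))
                  (B (nabla (restrict (fun i => negb (p i)) Phi) e)))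
            (B (nabla Phi e)).

Definition ESF8 {P S E : Type} (lt : S -> S -> Prop) (B : E -> form P)
    (nabla : profile S E -> E -> E) : Prop :=
  forall (Phi : profile S E) (p : S -> bool) (e : E),
    is_profile lt Phi -> is_partition p Phi ->
    consistent (FAnd (B (nabla (restrict p Phi) e))
                     (B (nabla (restrict (fun i => negb (p i)) Phi) e))) ->
    entails (B (nabla Phi e))
            (FAnd (B (nabla (restrict p Phi) e))
                  (B (nabla (restrict (fun i => negb (p i)) Phi) e))).

(** (ESF-U): unanimity; the single-agent profile {i |-> E_i} is [(i, E_i)]. *)
Definition ESFU {P S E : Type} (lt : S -> S -> Prop) (B : E -> form P)
    (nabla : profile S E -> E -> E) : Prop :=
  forall (Phi : profile S E) (e : E),
    is_profile lt Phi ->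
    (forall a b, In a Phi -> In b Phi -> snd a = snd b) ->
    forall a, In a Phi -> fequiv (B (nabla Phi e)) (B (nabla [a] e)).

(* Main.v *)
Require Import Defs.
From Stdlib Require Import List Sorted ClassicalEpsilon.
Import ListNotations.

Lemma fequiv_sym {P} (f g : form P) : fequiv f g -> fequiv g f.
Proof. unfold fequiv; tauto. Qed.

Lemma fequiv_trans {P} (f g h : form P) : fequiv f g -> fequiv g h -> fequiv f h.
Proof. unfold fequiv, entails; firstorder. Qed.

Lemma fequiv_refl {P} (f : form P) : fequiv f f.
Proof. unfold fequiv, entails; firstorder. Qed.

Lemma filter_all_false {A} (q : A -> bool) (l : list A) :
  Forall (fun b => q b = false) l -> filter q l = [].
Proof. induction 1; simpl; auto. rewrite H; auto. Qed.

Lemma filter_all_true {A} (q : A -> bool) (l : list A) :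
  Forall (fun b => q b = true) l -> filter q l = l.
Proof. induction 1; simpl; auto. rewrite H; f_equal; auto. Qed.

Lemma filter_cons_true {A} (q : A -> bool) a l : q a = true -> filter q (a :: l) = a :: filter q l.
Proof. intro H; simpl; rewrite H; auto. Qed.
Lemma filter_cons_false {A} (q : A -> bool) a l : q a = false -> filter q (a :: l) = filter q l.
Proof. intro H; simpl; rewrite H; auto. Qed.

Theorem mainTheorem8 (P S E : Type) (B : E -> form P) (lt : S -> S -> Prop)
    (nabla : profile S E -> E -> E) :
  epistemic_space B -> well_order lt ->
  ESF2 lt B nabla -> ESF7 lt B nabla -> ESF8 lt B nabla ->
  ESFU lt B nabla.
Proof.
  intros HES HWO H2 H7 H8 Phi e HPhi Hall a Ha.
  set (x := snd a).
  assert (Hsing : forall s, fequiv (B (nabla [(s, x)] e)) (B (nabla [(fst a, x)] e))).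
  { intro s. apply H2.
    - split; [discriminate | repeat constructor].
    - split; [discriminate | repeat constructor].
    - reflexivity.
    - apply fequiv_refl. }
  assert (Key : forall Phi, is_profile lt Phi -> (forall b, In b Phi -> snd b = x) ->
            fequiv (B (nabla Phi e)) (B (nabla [(fst a, x)] e))).
  { clear Phi HPhi Hall Ha.
    induction Phi as [|a1 rest IH]; intros [Hne Hs] Hx.
    - congruence.
    - inversion Hs as [|? ? Hs' Hfa]; subst.
      destruct rest as [|b rest'].
      + destruct a1 as [s y]. simpl in Hx.
        assert (y = x) by (apply (Hx (s, y)); left; auto). subst y. apply Hsing.
      + set (p := fun i : S => if excluded_middle_informative (i = fst a1) then true else false).
        assert (Hr1 : restrict p (a1 :: b :: rest') = [a1]).
        { unfold restrict. rewrite filter_cons_true.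
          2:{ unfold p. destruct (excluded_middle_informative (fst a1 = fst a1)); congruence. }
          f_equal. apply filter_all_false.
          eapply Forall_impl; [|exact Hfa]. intros c Hc. simpl in Hc. unfold p.
          destruct (excluded_middle_informative (fst c = fst a1)); auto.
          rewrite e0 in Hc. exfalso; eapply wo_irrefl; eauto. }
        assert (Hr2 : restrict (fun i => negb (p i)) (a1 :: b :: rest') = b :: rest').
        { unfold restrict. rewrite filter_cons_false.
          2:{ unfold p. destruct (excluded_middle_informative (fst a1 = fst a1)); simpl; congruence. }
          apply filter_all_true.
          constructor.
          - inversion Hfa; subst. unfold p.
            destruct (excluded_middle_informative (fst b = fst a1)); auto.
            rewrite e0 in H1. exfalso; eapply wo_irrefl; eauto.
          - inversion Hfa; subst.
            eapply Forall_impl; [|exact H3]. intros c Hc. simpl in Hc. unfold p.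
            destruct (excluded_middle_informative (fst c = fst a1)); auto.
            rewrite e0 in Hc. exfalso; eapply wo_irrefl; eauto. }
        assert (Hpart : is_partition p (a1 :: b :: rest')).
        { unfold is_partition. rewrite Hr1, Hr2. split; discriminate. }
        assert (HP : is_profile lt (a1 :: b :: rest')) by (split; auto).
        assert (E1 : fequiv (B (nabla [a1] e)) (B (nabla [(fst a, x)] e))).
        { destruct a1 as [s y].
          assert (y = x) by (apply (Hx (s, y)); left; auto). subst y. apply Hsing. }
        assert (E2 : fequiv (B (nabla (b :: rest') e)) (B (nabla [(fst a, x)] e))).
        { apply IH. split; [discriminate|auto].
          intros c Hc. apply Hx. right; auto. }
        specialize (H7 _ p e HP Hpart). specialize (H8 _ p e HP Hpart).
        rewrite Hr1, Hr2 in H7, H8.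
        destruct E1 as [E1a E1b]. destruct E2 as [E2a E2b].
        split.
        * intros v Hv. apply E1a. apply H8 in Hv.
          -- simpl in Hv. apply andb_prop in Hv. tauto.
          -- destruct (es_B_consistent HES (nabla [(fst a, x)] e)) as [w Hw].
             exists w. simpl. rewrite (E1b w Hw), (E2b w Hw). reflexivity.
        * intros v Hv. apply H7. simpl. rewrite (E1b v Hv), (E2b v Hv). reflexivity. }
  destruct a as [s y]. apply Key; auto.
  intros b Hb. unfold x. simpl. apply (Hall b (s, y) Hb Ha).
Qed.
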